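(* (i) The commutator subgroup $H^\infty_+$ of $H^\infty$ is dense in $SO(4)$; (ii) $H^\infty$ is dense in $O(4)$; (iii) $\Sigma$ is dense in the unit sphere $\mathcal S$ of $\mathbb{R}^4$.
   Context: Let $\tau=(1+\sqrt5)/2$, $\tau'=(1-\sqrt5)/2$. Let $\Delta\subset\mathbb{R}^4$ be the set of 120 vectors consisting of: the 8 vectors obtained from $(\pm1,0,0,0)$ by permuting coordinates; the 16 vectors $\frac12(\pm1,\pm1,\pm1,\pm1)$; and the 96 vectors obtained from $\frac12(0,\pm1,\pm\tau',\pm\tau)$ (all sign choices) by even permutations of the coordinates. Let $\Delta'$ be the image of $\Delta$ under the Galois conjugation $\tau\leftrightarrow\tau'$ applied to each coordinate. For a unit vector $a$, $r_a(x)=x-2(x\cdot a)a$. Let $H_4$ (resp. $H_4'$) be the group generated by $r_a$, $a\in\Delta$ (resp. $a\in\Delta'$), and $H^\infty$ the subgroup of $O(4)$ generated by $H_4\cup H_4'$. Let $\Sigma=\{w(a): w\in H^\infty,\ a\in\Delta\cup\Delta'\}$. *)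

(* Defs.v *)
From Stdlib Require Import Reals Lra List.
Import ListNotations.
Open Scope R_scope.

Record V4 := mkV { c0 : R; c1 : R; c2 : R; c3 : R }.

Definition coord (x : V4) (i : nat) : R :=
  match i with 0%nat => c0 x | 1%nat => c1 x | 2%nat => c2 x | _ => c3 x end.

Definition vadd (x y : V4) : V4 := mkV (c0 x + c0 y) (c1 x + c1 y) (c2 x + c2 y) (c3 x + c3 y).
Definition vscal (k : R) (x : V4) : V4 := mkV (k * c0 x) (k * c1 x) (k * c2 x) (k * c3 x).
Definition vsub (x y : V4) : V4 := vadd x (vscal (-1) y).
Definition dot (x y : V4) : R := c0 x * c0 y + c1 x * c1 y + c2 x * c2 y + c3 x * c3 y.
Definition vnorm (x : V4) : R := sqrt (dot x x).

Definition e (j : nat) : V4 :=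
  match j with
  | 0%nat => mkV 1 0 0 0 | 1%nat => mkV 0 1 0 0
  | 2%nat => mkV 0 0 1 0 | _ => mkV 0 0 0 1 end.

Definition tau : R := (1 + sqrt 5) / 2.
Definition tau' : R := (1 - sqrt 5) / 2.

Definition permv (b : nat -> R) (p : nat * nat * nat * nat) : V4 :=
  let '(p0, p1, p2, p3) := p in mkV (b p0) (b p1) (b p2) (b p3).

Definition even_perms : list (nat * nat * nat * nat) :=
  [(0,1,2,3); (0,2,3,1); (0,3,1,2); (1,0,3,2); (1,2,0,3); (1,3,2,0);
   (2,0,1,3); (2,1,3,0); (2,3,0,1); (3,0,2,1); (3,1,0,2); (3,2,1,0)]%nat.

Definition sgn (b : bool) : R := if b then 1 else -1.

(* The root system Delta(t, t'); Delta = DeltaP tau tau', Delta' = DeltaP tau' tau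
   (Galois conjugation tau <-> tau' applied coordinatewise). *)
Definition DeltaP (t t' : R) (a : V4) : Prop :=
  (exists (j : nat) (s : bool), (j < 4)%nat /\ a = vscal (sgn s) (e j))
  \/
  (exists s0 s1 s2 s3 : bool,
      a = mkV (sgn s0 / 2) (sgn s1 / 2) (sgn s2 / 2) (sgn s3 / 2))
  \/
  (* 96 vectors: even permutations of 1/2(0,+-1,+-t',+-t) *)
  (exists (p : nat * nat * nat * nat) (s1 s2 s3 : bool),
      In p even_perms /\
      a = permv (fun i => match i with
                          | 0%nat => 0
                          | 1%nat => sgn s1 / 2
                          | 2%nat => sgn s2 * t' / 2
                          | _ => sgn s3 * t / 2 end) p).

Definition Delta : V4 -> Prop := DeltaP tau tau'.
Definition Delta' : V4 -> Prop := DeltaP tau' tau.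

Definition refl (a : V4) (x : V4) : V4 := vsub x (vscal (2 * dot x a) a).

Inductive gen_group (S : (V4 -> V4) -> Prop) : (V4 -> V4) -> Prop :=
  | gg_id : gen_group S (fun x => x)
  | gg_base : forall g, S g -> gen_group S g
  | gg_comp : forall g h, gen_group S g -> gen_group S h ->
                gen_group S (fun x => g (h x))
  | gg_inv : forall g h, gen_group S g ->
               (forall x, h (g x) = x) -> (forall x, g (h x) = x) ->
               gen_group S h.

Definition Hinf : (V4 -> V4) -> Prop :=
  gen_group (fun g => exists a, (Delta a \/ Delta' a) /\ g = refl a).

Definition Hinf_plus : (V4 -> V4) -> Prop :=
  gen_group (fun c => exists g h gi hi,
      Hinf g /\ Hinf h /\
      (forall x, gi (g x) = x) /\ (forall x, g (gi x) = x) /\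
      (forall x, hi (h x) = x) /\ (forall x, h (hi x) = x) /\
      c = (fun x => g (h (gi (hi x))))).

Definition Sigma (v : V4) : Prop :=
  exists w a, Hinf w /\ (Delta a \/ Delta' a) /\ v = w a.

(* O(4): maps R^4 -> R^4 preserving the inner product (these are exactly the
   orthogonal linear maps) *)
Definition O4 (f : V4 -> V4) : Prop := forall x y, dot (f x) (f y) = dot x y.

(* determinant of the matrix of f (entry (i,j) = i-th coordinate of f(e_j)) *)
Definition det3 (a11 a12 a13 a21 a22 a23 a31 a32 a33 : R) : R :=
  a11 * (a22 * a33 - a23 * a32) - a12 * (a21 * a33 - a23 * a31)
  + a13 * (a21 * a32 - a22 * a31).

Definition det4 (f : V4 -> V4) : R :=
  let m (i j : nat) := coord (f (e j)) i in
  m 0%nat 0%nat * det3 (m 1%nat 1%nat) (m 1%nat 2%nat) (m 1%nat 3%nat) (m 2%nat 1%nat) (m 2%nat 2%nat) (m 2%nat 3%nat) (m 3%nat 1%nat) (m 3%nat 2%nat) (m 3%nat 3%nat)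
  - m 0%nat 1%nat * det3 (m 1%nat 0%nat) (m 1%nat 2%nat) (m 1%nat 3%nat) (m 2%nat 0%nat) (m 2%nat 2%nat) (m 2%nat 3%nat) (m 3%nat 0%nat) (m 3%nat 2%nat) (m 3%nat 3%nat)
  + m 0%nat 2%nat * det3 (m 1%nat 0%nat) (m 1%nat 1%nat) (m 1%nat 3%nat) (m 2%nat 0%nat) (m 2%nat 1%nat) (m 2%nat 3%nat) (m 3%nat 0%nat) (m 3%nat 1%nat) (m 3%nat 3%nat)
  - m 0%nat 3%nat * det3 (m 1%nat 0%nat) (m 1%nat 1%nat) (m 1%nat 2%nat) (m 2%nat 0%nat) (m 2%nat 1%nat) (m 2%nat 2%nat) (m 3%nat 0%nat) (m 3%nat 1%nat) (m 3%nat 2%nat).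

Definition SO4 (f : V4 -> V4) : Prop := O4 f /\ det4 f = 1.

(* G is dense in the set X of linear maps (matrix-norm topology: columns close) *)
Definition dense_maps (G X : (V4 -> V4) -> Prop) : Prop :=
  forall f, X f -> forall eps, 0 < eps ->
    exists g, G g /\ forall j, (j < 4)%nat -> vnorm (vsub (g (e j)) (f (e j))) < eps.

Definition sphere (x : V4) : Prop := dot x x = 1.

Definition dense_in_sphere (A : V4 -> Prop) : Prop :=
  (forall v, A v -> sphere v) /\
  forall x, sphere x -> forall eps, 0 < eps ->
    exists v, A v /\ vnorm (vsub v x) < eps.

(* Main.v *)
From Stdlib Require Import Reals Lra Lia ZArith Nsatz List Classical FunctionalExtensionality.
Require Import Defs.
Import ListNotations.
Open Scope R_scope.

Lemma V4eq : forall x y : V4, c0 x = c0 y -> c1 x = c1 y -> c2 x = c2 y -> c3 x = c3 y -> x = y.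
Proof. intros [] [] ; simpl; intros; subst; reflexivity. Qed.

Ltac vext := apply V4eq; cbv beta iota delta [refl vsub vadd vscal dot e c0 c1 c2 c3].

Lemma dot_sym : forall x y, dot x y = dot y x.
Proof. intros; unfold dot; ring. Qed.
Lemma dot_add_l : forall x y z, dot (vadd x y) z = dot x z + dot y z.
Proof. intros; unfold dot, vadd; simpl; ring. Qed.
Lemma dot_add_r : forall x y z, dot z (vadd x y) = dot z x + dot z y.
Proof. intros; unfold dot, vadd; simpl; ring. Qed.
Lemma dot_scal_l : forall k x z, dot (vscal k x) z = k * dot x z.
Proof. intros; unfold dot, vscal; simpl; ring. Qed.
Lemma dot_scal_r : forall k x z, dot z (vscal k x) = k * dot z x.
Proof. intros; unfold dot, vscal; simpl; ring. Qed.
Lemma dot_sub_l : forall x y z, dot (vsub x y) z = dot x z - dot y z.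
Proof. intros; unfold dot, vsub, vadd, vscal; simpl; ring. Qed.
Lemma dot_sub_r : forall x y z, dot z (vsub x y) = dot z x - dot z y.
Proof. intros; unfold dot, vsub, vadd, vscal; simpl; ring. Qed.
Lemma dot_ge0 : forall x, 0 <= dot x x.
Proof. intros; unfold dot; nra. Qed.
Lemma dot_eq0 : forall x, dot x x = 0 -> x = mkV 0 0 0 0.
Proof. intros [a b c d]; unfold dot; simpl; intros H; apply V4eq; simpl; nra. Qed.

Definition vzero := mkV 0 0 0 0.

Lemma refl_dot : forall a x y, dot a a = 1 -> dot (refl a x) (refl a y) = dot x y.
Proof.
  intros [a0 a1 a2 a3] [x0 x1 x2 x3] [y0 y1 y2 y3] H. unfold refl, vsub, vadd, vscal, dot in *; simpl in *.
  nsatz.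
Qed.
Lemma refl_invol : forall a x, dot a a = 1 -> refl a (refl a x) = x.
Proof.
  intros [a0 a1 a2 a3] [x0 x1 x2 x3] H. unfold dot in H; simpl in H.
  vext; nsatz.
Qed.
Lemma refl_add : forall a x y, refl a (vadd x y) = vadd (refl a x) (refl a y).
Proof. intros; vext; ring. Qed.
Lemma refl_scal : forall a k x, refl a (vscal k x) = vscal k (refl a x).
Proof. intros; vext; ring. Qed.
Lemma refl_sub : forall a x y, refl a (vsub x y) = vsub (refl a x) (refl a y).
Proof. intros; vext; ring. Qed.

Lemma O4_add : forall f, O4 f -> forall x y, f (vadd x y) = vadd (f x) (f y).
Proof.
  intros f Hf x y.
  set (D := vsub (f (vadd x y)) (vadd (f x) (f y))).
  assert (HD : dot D D = 0).
  { unfold D. rewrite !dot_sub_l, !dot_sub_r, !dot_add_l, !dot_add_r, !Hf.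
    rewrite !dot_add_l, !dot_add_r. rewrite (dot_sym y x). ring. }
  apply dot_eq0 in HD. unfold D in HD.
  destruct (f (vadd x y)) as [p0 p1 p2 p3]; destruct (f x) as [q0 q1 q2 q3];
  destruct (f y) as [r0 r1 r2 r3].
  unfold vsub, vadd, vscal in HD; simpl in HD. injection HD; intros.
  vext; lra.
Qed.
Lemma O4_scal : forall f, O4 f -> forall k x, f (vscal k x) = vscal k (f x).
Proof.
  intros f Hf k x.
  set (D := vsub (f (vscal k x)) (vscal k (f x))).
  assert (HD : dot D D = 0).
  { unfold D. rewrite !dot_sub_l, !dot_sub_r, !dot_scal_l, !dot_scal_r, !Hf.
    rewrite !dot_scal_l, !dot_scal_r. ring. }
  apply dot_eq0 in HD. unfold D in HD.
  destruct (f (vscal k x)) as [p0 p1 p2 p3]; destruct (f x) as [q0 q1 q2 q3].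
  unfold vsub, vadd, vscal in HD; simpl in HD. injection HD; intros.
  vext; lra.
Qed.
Lemma O4_sub : forall f, O4 f -> forall x y, f (vsub x y) = vsub (f x) (f y).
Proof. intros f Hf x y. unfold vsub. rewrite O4_add, O4_scal; auto. Qed.

Lemma O4_refl : forall a, dot a a = 1 -> O4 (refl a).
Proof. intros a H x y; apply refl_dot; auto. Qed.
Lemma O4_comp : forall f g, O4 f -> O4 g -> O4 (fun x => f (g x)).
Proof. intros f g Hf Hg x y; rewrite Hf, Hg; auto. Qed.
Lemma O4_inv : forall g h, O4 g -> (forall x, g (h x) = x) -> O4 h.
Proof. intros g h Hg Hgh x y. rewrite <- (Hgh x), <- (Hgh y) at 2. rewrite Hg. auto. Qed.

Lemma sgn_sq : forall s, sgn s * sgn s = 1.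
Proof. destruct s; simpl; ring. Qed.

Lemma DeltaP_unit : forall t t' a, t*t + t'*t' = 3 -> DeltaP t t' a -> dot a a = 1.
Proof.
  intros t t' a Ht [H|[H|H]].
  - destruct H as [j [s [Hj ->]]].
    destruct j as [|[|[|[|j]]]]; try lia; unfold dot, vscal, e; simpl;
    pose proof (sgn_sq s); nra.
  - destruct H as [s0 [s1 [s2 [s3 ->]]]]. unfold dot; simpl.
    pose proof (sgn_sq s0); pose proof (sgn_sq s1); pose proof (sgn_sq s2); pose proof (sgn_sq s3).
    nra.
  - destruct H as [p [s1 [s2 [s3 [Hp ->]]]]].
    pose proof (sgn_sq s1); pose proof (sgn_sq s2); pose proof (sgn_sq s3).
    unfold even_perms in Hp; simpl in Hp.
    repeat (destruct Hp as [Hp|Hp]; [subst p; unfold dot, permv; simpl; nra|]).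
    contradiction.
Qed.

Lemma sqrt5_sq : sqrt 5 * sqrt 5 = 5.
Proof. apply sqrt_sqrt; lra. Qed.
Lemma tau_sq : tau * tau = tau + 1.
Proof. unfold tau. pose proof sqrt5_sq. nra. Qed.
Lemma tau'_eq : tau' = 1 - tau.
Proof. unfold tau, tau'. field. Qed.
Lemma tau_sq_sum : tau*tau + tau'*tau' = 3.
Proof. rewrite tau'_eq. pose proof tau_sq. nra. Qed.
Lemma tau_sq_sum' : tau'*tau' + tau*tau = 3.
Proof. pose proof tau_sq_sum. lra. Qed.

Lemma Delta_unit : forall a, Delta a \/ Delta' a -> dot a a = 1.
Proof.
  intros a [H|H].
  - exact (DeltaP_unit _ _ _ tau_sq_sum H).
  - exact (DeltaP_unit _ _ _ tau_sq_sum' H).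
Qed.

Lemma Hinf_O4 : forall g, Hinf g -> O4 g.
Proof.
  intros g H; induction H.
  - intros x y; reflexivity.
  - destruct H as [a [Ha ->]]. apply O4_refl, Delta_unit; auto.
  - apply O4_comp; auto.
  - eapply O4_inv; eauto.
Qed.

Lemma Hinf_inv : forall g, Hinf g -> exists h, Hinf h /\ (forall x, h (g x) = x) /\ (forall x, g (h x) = x).
Proof.
  intros g H; induction H.
  - exists (fun x => x); repeat split; auto. apply gg_id.
  - exists g; repeat split; auto. apply gg_base; auto.
    + destruct H as [a [Ha ->]]. intros; apply refl_invol, Delta_unit; auto.
    + destruct H as [a [Ha ->]]. intros; apply refl_invol, Delta_unit; auto.
  - destruct IHgen_group1 as [gi [Hgi [A1 A2]]]; destruct IHgen_group2 as [hi [Hhi [B1 B2]]].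
    exists (fun x => hi (gi x)); repeat split.
    + apply gg_comp; auto.
    + intros; rewrite A1, B1; auto.
    + intros; rewrite B2, A2; auto.
  - exists g; repeat split; auto.
Qed.

Lemma Hinf_refl : forall a, Delta a \/ Delta' a -> Hinf (refl a).
Proof. intros a Ha; apply gg_base; eauto. Qed.

Definition d4 (m : nat -> nat -> R) : R :=
  m 0%nat 0%nat * det3 (m 1%nat 1%nat) (m 1%nat 2%nat) (m 1%nat 3%nat) (m 2%nat 1%nat) (m 2%nat 2%nat) (m 2%nat 3%nat) (m 3%nat 1%nat) (m 3%nat 2%nat) (m 3%nat 3%nat)
  - m 0%nat 1%nat * det3 (m 1%nat 0%nat) (m 1%nat 2%nat) (m 1%nat 3%nat) (m 2%nat 0%nat) (m 2%nat 2%nat) (m 2%nat 3%nat) (m 3%nat 0%nat) (m 3%nat 2%nat) (m 3%nat 3%nat)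
  + m 0%nat 2%nat * det3 (m 1%nat 0%nat) (m 1%nat 1%nat) (m 1%nat 3%nat) (m 2%nat 0%nat) (m 2%nat 1%nat) (m 2%nat 3%nat) (m 3%nat 0%nat) (m 3%nat 1%nat) (m 3%nat 3%nat)
  - m 0%nat 3%nat * det3 (m 1%nat 0%nat) (m 1%nat 1%nat) (m 1%nat 2%nat) (m 2%nat 0%nat) (m 2%nat 1%nat) (m 2%nat 2%nat) (m 3%nat 0%nat) (m 3%nat 1%nat) (m 3%nat 2%nat).
Definition mmul (a b : nat -> nat -> R) i j := a i 0%nat * b 0%nat j + a i 1%nat * b 1%nat j + a i 2%nat * b 2%nat j + a i 3%nat * b 3%nat j.
Lemma d4_mul : forall a b, d4 (mmul a b) = d4 a * d4 b.
Proof. intros. unfold d4, mmul, det3. ring. Qed.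
Lemma d4_ext : forall m m', (forall i j, m i j = m' i j) -> d4 m = d4 m'.
Proof. intros m m' H; unfold d4; rewrite !H; reflexivity. Qed.
Definition mat (f : V4 -> V4) i j := coord (f (e j)) i.
Lemma det4_d4 : forall f, det4 f = d4 (mat f).
Proof. reflexivity. Qed.

Lemma vdecomp : forall v, v = vadd (vadd (vadd (vscal (c0 v) (e 0)) (vscal (c1 v) (e 1))) (vscal (c2 v) (e 2))) (vscal (c3 v) (e 3)).
Proof. intros [a b c d]; vext; ring. Qed.

Lemma O4_coord : forall g v i, O4 g -> coord (g v) i =
  c0 v * coord (g (e 0)) i + c1 v * coord (g (e 1)) i + c2 v * coord (g (e 2)) i + c3 v * coord (g (e 3)) i.
Proof.
  intros g v i Hg.
  assert (E : g v = vadd (vadd (vadd (vscal (c0 v) (g (e 0))) (vscal (c1 v) (g (e 1)))) (vscal (c2 v) (g (e 2)))) (vscal (c3 v) (g (e 3)))).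
  { rewrite (vdecomp v) at 1. rewrite !(O4_add g Hg). rewrite !(O4_scal g Hg). reflexivity. }
  rewrite E. destruct i as [|[|[|i]]]; unfold vadd, vscal; simpl; ring.
Qed.

Lemma det4_comp : forall g h, O4 g -> O4 h -> det4 (fun x => g (h x)) = det4 g * det4 h.
Proof.
  intros g h Hg Hh. rewrite !det4_d4, <- d4_mul. apply d4_ext. intros i j.
  unfold mat, mmul. rewrite O4_coord by auto.
  replace (c0 (h (e j))) with (coord (h (e j)) 0) by reflexivity.
  replace (c1 (h (e j))) with (coord (h (e j)) 1) by reflexivity.
  replace (c2 (h (e j))) with (coord (h (e j)) 2) by reflexivity.
  replace (c3 (h (e j))) with (coord (h (e j)) 3) by reflexivity. ring.
Qed.

Lemma det4_ext : forall f f', (forall x, f x = f' x) -> det4 f = det4 f'.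
Proof. intros f f' H; unfold det4; rewrite !H; reflexivity. Qed.

Lemma det4_id : det4 (fun x => x) = 1.
Proof. unfold det4, det3; simpl; ring. Qed.

Lemma det4_inv : forall g h, O4 g -> O4 h -> (forall x, g (h x) = x) -> det4 g * det4 h = 1.
Proof. intros g h Hg Hh H. rewrite <- det4_comp by auto. rewrite (det4_ext _ _ H). apply det4_id. Qed.

Lemma Hinf_plus_SO4 : forall g, Hinf_plus g -> SO4 g.
Proof.
  intros g H; induction H.
  - split; [intros x y; reflexivity| apply det4_id].
  - rename g into g0. destruct H as [g [h [gi [hi [Hg [Hh [A1 [A2 [B1 [B2 ->]]]]]]]]]].
    pose proof (Hinf_O4 _ Hg) as Og; pose proof (Hinf_O4 _ Hh) as Oh.
    pose proof (O4_inv g gi Og A2) as Ogi.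
    pose proof (O4_inv h hi Oh B2) as Ohi.
    split.
    + apply (O4_comp g); auto. apply (O4_comp h); auto. apply (O4_comp gi); auto.
    + assert (O1 : O4 (fun x => gi (hi x))) by (apply (O4_comp gi); auto).
      assert (O2 : O4 (fun x => h (gi (hi x)))) by (apply (O4_comp h); auto).
      rewrite (det4_comp g _ Og O2). rewrite (det4_comp h _ Oh O1). rewrite (det4_comp gi _ Ogi Ohi).
      pose proof (det4_inv g gi Og Ogi A2); pose proof (det4_inv h hi Oh Ohi B2).
      nra.
  - destruct IHgen_group1 as [Og Dg], IHgen_group2 as [Oh Dh]. split.
    + apply O4_comp; auto.
    + rewrite (det4_comp g h) by auto. rewrite Dg, Dh; ring.
  - destruct IHgen_group as [Og Dg]. pose proof (O4_inv g h Og H1) as Oh.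
    split; auto. pose proof (det4_inv g h Og Oh H1). rewrite Dg in H2. lra.
Qed.

Lemma vnorm_ge0 : forall v, 0 <= vnorm v.
Proof. intros; unfold vnorm; apply sqrt_pos. Qed.
Lemma vnorm_sq : forall v, vnorm v * vnorm v = dot v v.
Proof. intros; unfold vnorm; apply sqrt_sqrt, dot_ge0. Qed.
Lemma vnorm_unit : forall v, dot v v = 1 -> vnorm v = 1.
Proof. intros v H; unfold vnorm; rewrite H; apply sqrt_1. Qed.

Lemma sq_le_sqrt : forall a b, 0 <= b -> 0 <= a -> a * a <= b * b -> a <= b.
Proof. intros; nra. Qed.

Lemma CS_sq : forall u v, dot u v * dot u v <= dot u u * dot v v.
Proof.
  intros [a0 a1 a2 a3] [b0 b1 b2 b3]; unfold dot; simpl.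
  assert (E : (a0*a0+a1*a1+a2*a2+a3*a3)*(b0*b0+b1*b1+b2*b2+b3*b3) - (a0*b0+a1*b1+a2*b2+a3*b3)*(a0*b0+a1*b1+a2*b2+a3*b3)
   = (a0*b1-a1*b0)^2 + (a0*b2-a2*b0)^2 + (a0*b3-a3*b0)^2 + (a1*b2-a2*b1)^2 + (a1*b3-a3*b1)^2 + (a2*b3-a3*b2)^2) by ring.
  pose proof (pow2_ge_0 (a0*b1-a1*b0)); pose proof (pow2_ge_0 (a0*b2-a2*b0)); pose proof (pow2_ge_0 (a0*b3-a3*b0));
  pose proof (pow2_ge_0 (a1*b2-a2*b1)); pose proof (pow2_ge_0 (a1*b3-a3*b1)); pose proof (pow2_ge_0 (a2*b3-a3*b2)).
  lra.
Qed.

Lemma CS : forall u v, Rabs (dot u v) <= vnorm u * vnorm v.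
Proof.
  intros u v. apply sq_le_sqrt.
  - apply Rmult_le_pos; apply vnorm_ge0.
  - apply Rabs_pos.
  - replace (Rabs (dot u v) * Rabs (dot u v)) with (dot u v * dot u v).
    + replace (vnorm u * vnorm v * (vnorm u * vnorm v)) with ((vnorm u * vnorm u) * (vnorm v * vnorm v)) by ring.
      rewrite !vnorm_sq. apply CS_sq.
    + rewrite <- Rabs_mult. rewrite Rabs_right; auto. apply Rle_ge. nra.
Qed.

Lemma vnorm_add : forall u v, vnorm (vadd u v) <= vnorm u + vnorm v.
Proof.
  intros u v. apply sq_le_sqrt.
  - pose proof (vnorm_ge0 u); pose proof (vnorm_ge0 v); lra.
  - apply vnorm_ge0.
  - rewrite vnorm_sq. rewrite dot_add_l, !dot_add_r.
    pose proof (CS u v). pose proof (vnorm_sq u). pose proof (vnorm_sq v).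
    rewrite (dot_sym v u). pose proof (Rle_abs (dot u v)). nra.
Qed.



Lemma vnorm_scal : forall k v, vnorm (vscal k v) = Rabs k * vnorm v.
Proof.
  intros k v. apply Rsqr_inj.
  - apply vnorm_ge0.
  - apply Rmult_le_pos; [apply Rabs_pos|apply vnorm_ge0].
  - unfold Rsqr. replace (Rabs k * vnorm v * (Rabs k * vnorm v)) with ((Rabs k * Rabs k) * (vnorm v * vnorm v)) by ring.
    rewrite !vnorm_sq, <- Rabs_mult, Rabs_right by nra. rewrite dot_scal_l, dot_scal_r. ring.
Qed.

Lemma vsub_tri : forall x y z, vnorm (vsub x z) <= vnorm (vsub x y) + vnorm (vsub y z).
Proof.
  intros. replace (vsub x z) with (vadd (vsub x y) (vsub y z)) by (vext; ring). apply vnorm_add.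
Qed.

Lemma vnorm_O4 : forall f v, O4 f -> vnorm (f v) = vnorm v.
Proof. intros f v H; unfold vnorm; rewrite H; auto. Qed.

Lemma vnorm_sub_sym : forall x y, vnorm (vsub x y) = vnorm (vsub y x).
Proof. intros. replace (vsub y x) with (vscal (-1) (vsub x y)) by (vext; ring). rewrite vnorm_scal.
  replace (Rabs (-1)) with 1 by (rewrite Rabs_left; lra); ring. Qed.

Lemma vnorm_zero : forall x, vnorm (vsub x x) = 0.
Proof. intros; unfold vnorm, dot, vsub, vadd, vscal; simpl. replace (_ + _) with 0 by ring. apply sqrt_0. Qed.

Lemma refl_diff : forall s k x, sphere s -> sphere k -> sphere x ->
  vnorm (vsub (refl s x) (refl k x)) <= 4 * vnorm (vsub s k).
Proof.
  intros s k x Hs Hk Hx.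
  replace (vsub (refl s x) (refl k x)) with
    (vscal 2 (vadd (vscal (dot x k) (vsub k s)) (vscal (dot x (vsub k s)) s))) by (vext; ring).
  rewrite vnorm_scal, Rabs_right by lra.
  pose proof (vnorm_add (vscal (dot x k) (vsub k s)) (vscal (dot x (vsub k s)) s)).
  rewrite !vnorm_scal in H.
  pose proof (CS x k). pose proof (CS x (vsub k s)).
  unfold sphere in *. rewrite (vnorm_unit x Hx), (vnorm_unit k Hk) in *. rewrite (vnorm_unit s Hs) in *.
  rewrite (vnorm_sub_sym k s) in *.
  pose proof (vnorm_ge0 (vsub s k)). pose proof (Rabs_pos (dot x k)). pose proof (Rabs_pos (dot x (vsub k s))).
  nra.
Qed.

Lemma refl_approx : forall s k t x, sphere s -> sphere k -> sphere x ->
  vnorm (vsub (refl s t) (refl k x)) <= vnorm (vsub t x) + 4 * vnorm (vsub s k).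
Proof.
  intros s k t x Hs Hk Hx.
  eapply Rle_trans. apply (vsub_tri _ (refl s x)).
  apply Rplus_le_compat.
  - rewrite <- refl_sub. rewrite vnorm_O4; [lra|]. apply O4_refl; auto.
  - apply refl_diff; auto.
Qed.

Lemma Sigma_sphere : forall s, Sigma s -> sphere s.
Proof.
  intros s [w [a [Hw [Ha ->]]]]. unfold sphere. rewrite (Hinf_O4 w Hw). apply Delta_unit; auto.
Qed.

Lemma refl_conj : forall w wi a x, O4 w -> (forall y, w (wi y) = y) ->
  refl (w a) x = w (refl a (wi x)).
Proof.
  intros w wi a x Hw Hi. unfold refl at 2. rewrite O4_sub, O4_scal by auto. rewrite Hi.
  unfold refl. f_equal. f_equal. f_equal. rewrite <- (Hi x) at 1. rewrite Hw. reflexivity.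
Qed.

Lemma Hinf_refl_Sigma : forall s, Sigma s -> exists w, Hinf w /\ forall x, refl s x = w x.
Proof.
  intros s [w [a [Hw [Ha ->]]]]. destruct (Hinf_inv w Hw) as [wi [Hwi [A1 A2]]].
  exists (fun x => w (refl a (wi x))). split.
  - apply gg_comp; auto. apply gg_comp; auto. apply Hinf_refl; auto.
  - intros x. apply refl_conj; auto. apply Hinf_O4; auto.
Qed.

Lemma Sigma_Hinf : forall w s, Hinf w -> Sigma s -> Sigma (w s).
Proof.
  intros w s Hw [w' [a [Hw' [Ha ->]]]]. exists (fun x => w (w' x)), a. repeat split; auto.
  apply gg_comp; auto.
Qed.

Lemma Sigma_refl : forall s t, Sigma s -> Sigma t -> Sigma (refl s t).
Proof.
  intros s t Hs Ht. destruct (Hinf_refl_Sigma s Hs) as [w [Hw E]]. rewrite E. apply Sigma_Hinf; auto.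
Qed.

Definition K (x : V4) : Prop := sphere x /\ forall eps, 0 < eps -> exists s, Sigma s /\ vnorm (vsub s x) < eps.

Lemma K_Sigma : forall s, Sigma s -> K s.
Proof. intros s Hs; split. apply Sigma_sphere; auto. intros eps He; exists s; split; auto. rewrite vnorm_zero; auto. Qed.

Lemma K_refl : forall k x, K k -> K x -> K (refl k x).
Proof.
  intros k x [Hk Ak] [Hx Ax]. split.
  - unfold sphere. rewrite refl_dot; auto.
  - intros eps He. destruct (Ak (eps/5)) as [s [Hs Ds]]; [lra|]. destruct (Ax (eps/5)) as [t [Ht Dt]]; [lra|].
    exists (refl s t); split. apply Sigma_refl; auto.
    pose proof (refl_approx s k t x (Sigma_sphere s Hs) Hk Hx). lra.
Qed.

Lemma K_Hinf : forall w x, Hinf w -> K x -> K (w x).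
Proof.
  intros w x Hw [Hx Ax]. pose proof (Hinf_O4 w Hw) as Ow. split.
  - unfold sphere; rewrite Ow; auto.
  - intros eps He. destruct (Ax eps He) as [s [Hs Ds]]. exists (w s); split. apply Sigma_Hinf; auto.
    rewrite <- O4_sub, vnorm_O4; auto.
Qed.

Lemma K_Delta : forall a, Delta a \/ Delta' a -> K a.
Proof. intros a Ha. apply K_Sigma. exists (fun x => x), a. repeat split; auto. apply gg_id. Qed.

Definition fl (x : R) : Z := (up x - 1)%Z.
Lemma fl_spec : forall x, IZR (fl x) <= x < IZR (fl x) + 1.
Proof. intros x. unfold fl. rewrite minus_IZR. destruct (archimed x). simpl. lra. Qed.

Lemma cos_perZ : forall x z, cos (x + 2 * IZR z * PI) = cos x.
Proof.
  intros x z. destruct (Z_le_gt_dec 0 z) as [Hz|Hz].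
  - rewrite <- (Z2Nat.id z Hz), <- INR_IZR_INZ. apply cos_period.
  - assert (Hz' : (0 <= - z)%Z) by lia.
    rewrite <- (cos_period (x + 2 * IZR z * PI) (Z.to_nat (- z))).
    rewrite INR_IZR_INZ, Z2Nat.id by auto. rewrite opp_IZR. f_equal; ring.
Qed.
Lemma sin_perZ : forall x z, sin (x + 2 * IZR z * PI) = sin x.
Proof.
  intros x z. destruct (Z_le_gt_dec 0 z) as [Hz|Hz].
  - rewrite <- (Z2Nat.id z Hz), <- INR_IZR_INZ. apply sin_period.
  - assert (Hz' : (0 <= - z)%Z) by lia.
    rewrite <- (sin_period (x + 2 * IZR z * PI) (Z.to_nat (- z))).
    rewrite INR_IZR_INZ, Z2Nat.id by auto. rewrite opp_IZR. f_equal; ring.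
Qed.

Lemma abs_sin_le : forall x, Rabs (sin x) <= Rabs x.
Proof.
  assert (P : forall x, 0 < x -> Rabs (sin x) <= x).
  { intros x Hx. destruct (Rle_lt_dec 1 x).
    - pose proof (SIN_bound x). apply Rabs_le. lra.
    - pose proof (sin_lt_x x Hx). assert (0 < sin x) by (apply sin_gt_0; pose proof PI2_1; lra).
      rewrite Rabs_right; lra. }
  intros x. destruct (Rtotal_order x 0) as [H|[H|H]].
  - rewrite <- (Ropp_involutive x), sin_neg, Rabs_Ropp, Rabs_Ropp. rewrite (Rabs_right (-x)) by lra. apply P; lra.
  - subst; rewrite sin_0, Rabs_R0; lra.
  - rewrite (Rabs_right x) by lra. apply P; auto.
Qed.

Lemma cos_lip : forall a b, Rabs (cos a - cos b) <= Rabs (a - b).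
Proof.
  intros a b. rewrite form2. rewrite !Rabs_mult.
  pose proof (abs_sin_le ((a - b)/2)). pose proof (SIN_bound ((a+b)/2)).
  assert (Rabs (sin ((a+b)/2)) <= 1) by (apply Rabs_le; lra).
  replace (Rabs ((a-b)/2)) with (Rabs (a-b) / 2) in H.
  2:{ unfold Rdiv. rewrite Rabs_mult, (Rabs_right (/2)) by lra. auto. }
  replace (Rabs (-2)) with 2 by (rewrite Rabs_left; lra).
  pose proof (Rabs_pos (sin ((a - b) / 2))). pose proof (Rabs_pos (sin ((a + b) / 2))). nra.
Qed.

Lemma sin_lip : forall a b, Rabs (sin a - sin b) <= Rabs (a - b).
Proof.
  intros a b. rewrite form4. rewrite !Rabs_mult.
  pose proof (abs_sin_le ((a - b)/2)). pose proof (COS_bound ((a+b)/2)).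
  assert (Rabs (cos ((a+b)/2)) <= 1) by (apply Rabs_le; lra).
  replace (Rabs ((a-b)/2)) with (Rabs (a-b) / 2) in H.
  2:{ unfold Rdiv. rewrite Rabs_mult, (Rabs_right (/2)) by lra. auto. }
  rewrite (Rabs_right 2) by lra.
  pose proof (Rabs_pos (sin ((a - b) / 2))). pose proof (Rabs_pos (cos ((a + b) / 2))). nra.
Qed.

Lemma pigeon : forall N (f : nat -> nat), (forall k, (k <= N)%nat -> (f k < N)%nat) ->
  exists i j, (i < j <= N)%nat /\ f i = f j.
Proof.
  induction N as [|N IH]; intros f Hf.
  - specialize (Hf 0%nat (le_n 0)). lia.
  - destruct (classic (exists i, (i <= N)%nat /\ f i = f (S N))) as [[i [Hi E]]|Hn].
    + exists i, (S N). split; [lia|auto].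
    + set (g := fun k => if Nat.ltb (f k) (f (S N)) then f k else Nat.pred (f k)).
      destruct (IH g) as [i [j [Hij Eg]]].
      * intros k Hk. unfold g. pose proof (Hf k ltac:(lia)). pose proof (Hf (S N) (le_n _)).
        assert (f k <> f (S N)) by (intro; apply Hn; exists k; split; [lia|auto]).
        destruct (Nat.ltb_spec (f k) (f (S N))); lia.
      * exists i, j. split; [lia|].
        unfold g in Eg.
        assert (f i <> f (S N)) by (intro; apply Hn; exists i; split; [lia|auto]).
        assert (f j <> f (S N)) by (intro; apply Hn; exists j; split; [lia|auto]).
        destruct (Nat.ltb_spec (f i) (f (S N))); destruct (Nat.ltb_spec (f j) (f (S N))); lia.
Qed.

Definition red (x : R) : R := x - 2 * PI * IZR (fl (x / (2 * PI))).
Lemma red_spec : forall x, 0 <= red x < 2 * PI.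
Proof.
  intros x. unfold red. pose proof PI_RGT_0. destruct (fl_spec (x / (2*PI))) as [A B].
  split.
  - apply Rmult_le_compat_l with (r := 2*PI) in A; [|lra].
    replace (2 * PI * (x / (2 * PI))) with x in A by (field; lra). lra.
  - apply Rmult_lt_compat_l with (r := 2*PI) in B; [|lra].
    replace (2 * PI * (x / (2 * PI))) with x in B by (field; lra). lra.
Qed.
Lemma red_eq : forall x, x = red x + 2 * IZR (fl (x / (2*PI))) * PI.
Proof. intros; unfold red; ring. Qed.
Lemma cos_red : forall x, cos (red x) = cos x.
Proof. intros. rewrite (red_eq x) at 2. rewrite cos_perZ; auto. Qed.
Lemma sin_red : forall x, sin (red x) = sin x.
Proof. intros. rewrite (red_eq x) at 2. rewrite sin_perZ; auto. Qed.

Lemma fl_nonneg : forall x, 0 <= x -> (0 <= fl x)%Z.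
Proof.
  intros x Hx. destruct (fl_spec x). assert (-1 < IZR (fl x)) by lra.
  apply lt_IZR in H1. lia.
Qed.

Lemma INR_Z2Nat : forall z, (0 <= z)%Z -> INR (Z.to_nat z) = IZR z.
Proof. intros z Hz. rewrite INR_IZR_INZ, Z2Nat.id; auto. Qed.

Lemma kronecker : forall phi, (forall m : nat, (0 < m)%nat -> cos (INR m * phi) <> 1) ->
  forall psi eps, 0 < eps -> exists k : nat,
    Rabs (cos (INR k * phi) - cos psi) < eps /\ Rabs (sin (INR k * phi) - sin psi) < eps.
Proof.
  intros phi Hirr psi eps He.
  pose proof PI_RGT_0 as HPI.
  set (T := 2 * PI). assert (HT : 0 < T) by (unfold T; lra).
  destruct (archimed (T / eps)) as [HN _].
  assert (HTe : 0 < T / eps) by (apply Rdiv_lt_0_compat; auto).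
  assert (Hup : (0 <= up (T / eps))%Z) by (apply le_IZR; lra).
  set (N := Z.to_nat (up (T / eps))).
  assert (HNe : T / eps < INR N) by (unfold N; rewrite INR_Z2Nat by auto; lra).
  assert (HNp : 0 < INR N) by lra.
  assert (HTN : T / INR N < eps).
  { apply Rmult_lt_reg_r with (r := INR N); auto. unfold Rdiv. rewrite Rmult_assoc, Rinv_l by lra.
    apply Rmult_lt_reg_r with (r := / eps). apply Rinv_0_lt_compat; auto.
    replace (eps * INR N * / eps) with (INR N) by (field; lra). unfold Rdiv in HNe. lra. }
  set (alpha := fun k : nat => red (INR k * phi)).
  set (box := fun k => Z.to_nat (fl (alpha k * INR N / T))).
  assert (Hal : forall k, 0 <= alpha k < T) by (intros; apply red_spec).
  assert (Hbox0 : forall k, 0 <= alpha k * INR N / T < INR N).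
  { intros k. destruct (Hal k). split.
    - apply Rmult_le_pos; [apply Rmult_le_pos; lra| left; apply Rinv_0_lt_compat; auto].
    - apply Rmult_lt_reg_r with (r := T); auto. unfold Rdiv. rewrite Rmult_assoc, Rinv_l by lra. nra. }
  destruct (pigeon N box) as [i [j [Hij Eb]]].
  { intros k _. unfold box. destruct (Hbox0 k). pose proof (fl_spec (alpha k * INR N / T)) as [F1 F2].
    pose proof (fl_nonneg _ H).
    assert (IZR (fl (alpha k * INR N / T)) < IZR (Z.of_nat N)) by (rewrite <- INR_IZR_INZ; lra).
    apply lt_IZR in H2. lia. }
  unfold box in Eb.
  pose proof (fl_nonneg _ (proj1 (Hbox0 i))) as Fi0. pose proof (fl_nonneg _ (proj1 (Hbox0 j))) as Fj0.
  assert (Ez : fl (alpha i * INR N / T) = fl (alpha j * INR N / T)).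
  { apply Z2Nat.inj; auto. }
  set (delta := alpha j - alpha i).
  assert (Hd : Rabs delta < eps).
  { pose proof (fl_spec (alpha i * INR N / T)) as [A1 A2]. pose proof (fl_spec (alpha j * INR N / T)) as [B1 B2].
    rewrite Ez in A1, A2.
    assert (Rabs (alpha j * INR N / T - alpha i * INR N / T) < 1) by (apply Rabs_def1; lra).
    replace (alpha j * INR N / T - alpha i * INR N / T) with (delta * (INR N / T)) in H by (unfold delta; field; lra).
    rewrite Rabs_mult, (Rabs_right (INR N / T)) in H.
    2:{ apply Rle_ge; left; apply Rdiv_lt_0_compat; auto. }
    assert (Rabs delta < T / INR N).
    { apply Rmult_lt_reg_r with (r := INR N / T). apply Rdiv_lt_0_compat; auto.
      replace (T / INR N * (INR N / T)) with 1 by (field; lra). auto. }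
    lra. }
  set (m := (j - i)%nat).
  set (w := (fl (INR j * phi / (2*PI)) - fl (INR i * phi / (2*PI)))%Z).
  assert (Key : forall t : nat, INR (t * m) * phi = INR t * delta + 2 * IZR (Z.of_nat t * w) * PI).
  { intros t. unfold m, delta, alpha, w. rewrite mult_INR, minus_INR by lia.
    rewrite mult_IZR, minus_IZR, <- INR_IZR_INZ.
    pose proof (red_eq (INR j * phi)). pose proof (red_eq (INR i * phi)).
    replace (INR t * (INR j - INR i) * phi) with (INR t * (INR j * phi - INR i * phi)) by ring.
    rewrite H at 1. rewrite H0 at 1. ring. }
  assert (Hdn : delta <> 0).
  { intros Hd0. apply (Hirr m). unfold m; lia.
    pose proof (Key 1%nat). rewrite Nat.mul_1_l in H. rewrite H, Hd0, Rmult_0_r, Rplus_0_l.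
    replace (2 * IZR (Z.of_nat 1 * w) * PI) with (0 + 2 * IZR (Z.of_nat 1 * w) * PI) by ring.
    rewrite cos_perZ. apply cos_0. }
  assert (Fin : forall t : nat, forall target, Rabs (INR t * delta - target) < eps ->
     cos target = cos psi -> sin target = sin psi ->
     exists k : nat, Rabs (cos (INR k * phi) - cos psi) < eps /\ Rabs (sin (INR k * phi) - sin psi) < eps).
  { intros t target Ht Hc Hs. exists (t * m)%nat. rewrite Key, cos_perZ, sin_perZ, <- Hc, <- Hs.
    split; eapply Rle_lt_trans; [apply cos_lip| |apply sin_lip|]; auto. }
  set (psi0 := red psi). destruct (red_spec psi) as [P1 P2]. fold psi0 in P1, P2.
  destruct (Rtotal_order delta 0) as [Hneg|[H0|Hpos]]; [|contradiction|].
  - set (psi1 := psi0 - T).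
    assert (Hq : 0 <= psi1 / delta).
    { replace (psi1 / delta) with ((-psi1) * / (- delta)) by (field; lra).
      apply Rmult_le_pos; [unfold psi1, T; lra| left; apply Rinv_0_lt_compat; lra]. }
    set (t := Z.to_nat (fl (psi1 / delta))).
    destruct (fl_spec (psi1 / delta)) as [A1 A2].
    rewrite <- (INR_Z2Nat _ (fl_nonneg _ Hq)) in A1, A2. fold t in A1, A2.
    set (q := psi1 / delta) in *.
    assert (Eq : psi1 = q * delta) by (unfold q; field; lra).
    assert (Ep : psi1 = psi0 + 2 * IZR (-1) * PI) by (unfold psi1, T; simpl; ring).
    apply (Fin t psi1).
    + rewrite Rabs_left1 in Hd by lra. rewrite Rabs_right by nra. nra.
    + rewrite Ep, cos_perZ. apply cos_red.
    + rewrite Ep, sin_perZ. apply sin_red.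
  - assert (Hq : 0 <= psi0 / delta) by (apply Rmult_le_pos; [lra|left; apply Rinv_0_lt_compat; auto]).
    set (t := Z.to_nat (fl (psi0 / delta))).
    destruct (fl_spec (psi0 / delta)) as [A1 A2].
    rewrite <- (INR_Z2Nat _ (fl_nonneg _ Hq)) in A1, A2. fold t in A1, A2.
    apply (Fin t psi0).
    + apply Rmult_le_compat_r with (r := delta) in A1; [|lra].
      apply Rmult_lt_compat_r with (r := delta) in A2; [|lra].
      replace (psi0 / delta * delta) with psi0 in A1, A2 by (field; lra).
      rewrite Rabs_left1 by lra. rewrite Rabs_right in Hd by lra. lra.
    + apply cos_red.
    + apply sin_red.
Qed.

(* Chebyshev recurrence for cos theta = -1/4 *)
Fixpoint yc (n : nat) : Z :=
  match n with
  | O => 2%Z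
  | S O => (-1)%Z
  | S ((S m) as k) => (- yc k - 4 * yc m)%Z
  end.

Definition theta := acos (-1/4).
Lemma cos_theta : cos theta = -1/4.
Proof. unfold theta; apply cos_acos; lra. Qed.

Lemma cheb : forall n, cos (INR n * theta) = IZR (yc n) / 2 ^ (S n)
                   /\ cos (INR (S n) * theta) = IZR (yc (S n)) / 2 ^ (S (S n)).
Proof.
  induction n as [|n [IH1 IH2]].
  - simpl. rewrite Rmult_0_l, cos_0, Rmult_1_l, cos_theta. split; field.
  - split; auto.
    replace (INR (S (S n)) * theta) with (INR (S n) * theta + theta) by (rewrite !S_INR; ring).
    assert (E : cos (INR (S n) * theta + theta) = 2 * cos (INR (S n) * theta) * cos theta - cos (INR n * theta)).
    { replace (INR n * theta) with (INR (S n) * theta - theta) by (rewrite S_INR; ring).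
      rewrite cos_plus, cos_minus. ring. }
    rewrite E, IH1, IH2, cos_theta.
    change (yc (S (S n))) with (- yc (S n) - 4 * yc n)%Z.
    rewrite minus_IZR, opp_IZR, mult_IZR. simpl. field. apply pow_nonzero; lra.
Qed.

Lemma yc_odd : forall n, exists k, yc (S n) = (2 * k + 1)%Z.
Proof.
  induction n as [|n [k IH]].
  - exists (-1)%Z; reflexivity.
  - exists (- k - 1 - 2 * yc n)%Z. change (yc (S (S n))) with (- yc (S n) - 4 * yc n)%Z. rewrite IH. lia.
Qed.

Lemma theta_irr : forall n, (0 < n)%nat -> cos (INR n * theta) <> 1.
Proof.
  intros n Hn E. destruct n as [|n]; [lia|].
  destruct (cheb (S n)) as [H _]. rewrite E in H.
  assert (IZR (yc (S n)) = 2 ^ (S (S n))).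
  { assert (0 < 2 ^ (S (S n))) by (apply pow_lt; lra).
    apply (Rmult_eq_compat_r (2 ^ (S (S n)))) in H. rewrite Rmult_1_l in H. rewrite H. field. lra. }
  rewrite pow_IZR in H0. apply eq_IZR in H0.
  destruct (yc_odd n) as [k Hk]. rewrite Hk in H0.
  rewrite Nat2Z.inj_succ, Z.pow_succ_r in H0 by lia. lia.
Qed.

Lemma phi_irr : forall m, (0 < m)%nat -> cos (INR m * (2 * theta)) <> 1.
Proof.
  intros m Hm. replace (INR m * (2 * theta)) with (INR (2 * m) * theta) by (rewrite mult_INR; simpl; ring).
  apply theta_irr; lia.
Qed.

Section Rot.
Variables a b : V4.
Variables c s : R.
Hypothesis Ha : dot a a = 1.
Hypothesis Hb : dot b b = 1.
Hypothesis Hab : dot a b = c.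
Hypothesis Hs : s * s = 1 - c * c.
Hypothesis Hs0 : s <> 0.

Definition uvec := vscal (/ s) (vsub b (vscal c a)).
Definition Rot x := refl a (refl b x).

Lemma uvec_a : dot uvec a = 0.
Proof. unfold uvec. rewrite dot_scal_l, dot_sub_l, dot_scal_l, (dot_sym b a), Hab, Ha. ring. Qed.
Lemma uvec_u : dot uvec uvec = 1.
Proof.
  unfold uvec. rewrite dot_scal_l, dot_scal_r, dot_sub_l, !dot_sub_r, !dot_scal_l, !dot_scal_r.
  rewrite (dot_sym b a), Hab, Ha, Hb. field_simplify_eq; [|auto]. nra.
Qed.
Lemma b_dec : b = vadd (vscal c a) (vscal s uvec).
Proof. unfold uvec. vext; field; auto. Qed.

Lemma Rot_a : Rot a = vsub (vscal (2*c*c - 1) a) (vscal (2*s*c) uvec).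
Proof.
  unfold Rot. unfold refl at 2. rewrite Hab. rewrite refl_sub, refl_scal.
  unfold refl. rewrite Ha, (dot_sym b a), Hab. unfold uvec. vext; field; auto.
Qed.

Lemma Rot_u : Rot uvec = vadd (vscal (2*s*c) a) (vscal (2*c*c - 1) uvec).
Proof.
  unfold Rot. pose proof uvec_a. assert (Hub : dot uvec b = s).
  { rewrite b_dec, dot_add_r, !dot_scal_r, uvec_a, uvec_u. ring. }
  unfold refl at 2. rewrite Hub. rewrite refl_sub, refl_scal.
  unfold refl. rewrite H, (dot_sym b a), Hab. unfold uvec. vext; field_simplify_eq; auto; replace (s^2) with (1-c*c) by (rewrite <- Hs; ring); ring.
Qed.
End Rot.

Fixpoint iter (f : V4 -> V4) (k : nat) (x : V4) : V4 :=
  match k with O => x | S k => f (iter f k x) end.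

Lemma Rot_O4 : forall a b, dot a a = 1 -> dot b b = 1 -> O4 (Rot a b).
Proof. intros. unfold Rot. apply (O4_comp (refl a) (refl b)); apply O4_refl; auto. Qed.

Lemma Rot_iter : forall a b c s phi, dot a a = 1 -> dot b b = 1 -> dot a b = c -> s * s = 1 - c * c -> s <> 0 ->
  cos phi = 2*c*c - 1 -> sin phi = 2*s*c ->
  forall k, iter (Rot a b) k a = vsub (vscal (cos (INR k * phi)) a) (vscal (sin (INR k * phi)) (uvec a b c s)).
Proof.
  intros a b c s phi Ha Hb Hab Hs Hs0 Hc Hsn k. induction k as [|k IH].
  - simpl. rewrite Rmult_0_l, cos_0, sin_0. vext; ring.
  - simpl iter. rewrite IH. pose proof (Rot_O4 a b Ha Hb) as O.
    rewrite (O4_sub _ O), !(O4_scal _ O). rewrite (Rot_a a b c s), (Rot_u a b c s) by auto.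
    rewrite S_INR. replace ((INR k + 1) * phi) with (INR k * phi + phi) by ring.
    rewrite cos_plus, sin_plus, Hc, Hsn. vext; ring.
Qed.

Lemma iter_Hinf : forall f, Hinf f -> forall k, Hinf (fun x => iter f k x).
Proof.
  intros f Hf k. induction k as [|k IH].
  - simpl. apply gg_id.
  - simpl. apply (gg_comp _ f (fun x => iter f k x)); auto.
Qed.

Definition a3 := mkV 0 (1/2) (tau'/2) (tau/2).
Definition b3 := mkV 0 (1/2) (tau/2) (tau'/2).
Definition gp := mkV 0 1 (-1) (-1).

Lemma tau_tau' : tau * tau' = -1.
Proof. rewrite tau'_eq. pose proof tau_sq. nra. Qed.

Lemma a3_Delta : Delta a3.
Proof.
  unfold Delta, DeltaP. right; right. exists (0,1,2,3)%nat, true, true, true. split.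
  - simpl; auto.
  - unfold a3, permv, sgn. vext; field.
Qed.
Lemma b3_Delta' : Delta' b3.
Proof.
  unfold Delta', DeltaP. right; right. exists (0,1,2,3)%nat, true, true, true. split.
  - simpl; auto.
  - unfold b3, permv, sgn. vext; field.
Qed.

Lemma a3_unit : dot a3 a3 = 1.
Proof. apply Delta_unit; left; apply a3_Delta. Qed.
Lemma b3_unit : dot b3 b3 = 1.
Proof. apply Delta_unit; right; apply b3_Delta'. Qed.
Lemma a3b3 : dot a3 b3 = -1/4.
Proof. unfold dot, a3, b3; simpl. pose proof tau_tau'. nra. Qed.

Definition sth := sin theta.
Lemma sth_eq : sth = sqrt (1 - (-1/4)²).
Proof. unfold sth, theta. apply sin_acos; lra. Qed.
Lemma sth_sq : sth * sth = 1 - (-1/4) * (-1/4).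
Proof. rewrite sth_eq. rewrite sqrt_sqrt. unfold Rsqr; ring. unfold Rsqr; lra. Qed.
Lemma sth_pos : 0 < sth.
Proof. rewrite sth_eq. apply sqrt_lt_R0. unfold Rsqr; lra. Qed.
Lemma sth_nz : sth <> 0.
Proof. pose proof sth_pos; lra. Qed.

Definition u3 := uvec a3 b3 (-1/4) sth.

Lemma u3_a3 : dot u3 a3 = 0.
Proof. apply uvec_a. apply a3_unit. apply a3b3. Qed.
Lemma u3_unit : dot u3 u3 = 1.
Proof. apply uvec_u. apply a3_unit. apply b3_unit. apply a3b3. apply sth_sq. apply sth_nz. Qed.

Lemma P3_decomp : forall x, dot x (e 0) = 0 -> dot x gp = 0 ->
  x = vadd (vscal (dot x a3) a3) (vscal (dot x u3) u3).
Proof.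
  intros [x0 x1 x2 x3] H0 H1. unfold dot, e, gp in H0, H1; simpl in H0, H1.
  pose proof sth_nz as Hs. pose proof sth_sq as Hs2. pose proof tau_sq as Ht. pose proof tau'_eq as Ht'.
  assert (x0 = 0) by lra. assert (x1 = x2 + x3) by lra. subst x0 x1.
  unfold u3, uvec, a3, b3. rewrite !tau'_eq. vext; field_simplify_eq; auto;
  assert (Hs3 : 16 * sth^2 = 15) by (simpl; nra); assert (Ht2 : tau^2 = tau + 1) by (simpl; nra); clear Hs2 Ht'; nsatz.
Qed.

Lemma Rot3_Hinf : Hinf (Rot a3 b3).
Proof.
  change (Hinf (fun x => refl a3 (refl b3 x))). apply (gg_comp _ (refl a3) (refl b3)).
  apply Hinf_refl; left; apply a3_Delta. apply Hinf_refl; right; apply b3_Delta'.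
Qed.

Lemma psi_exists : forall p q, p * p + q * q = 1 -> exists psi, cos psi = p /\ sin psi = - q.
Proof.
  intros p q H. assert (Hp : -1 <= p <= 1) by (split; nra).
  assert (Hsq : sqrt (1 - p²) = Rabs q).
  { replace (1 - p²) with (q * q) by (unfold Rsqr; lra). apply sqrt_Rsqr_abs. }
  destruct (Rle_dec q 0) as [Hq|Hq].
  - exists (acos p). split. apply cos_acos; auto. rewrite sin_acos by auto. rewrite Hsq, Rabs_left1; lra.
  - exists (- acos p). split. rewrite cos_neg; apply cos_acos; auto.
    rewrite sin_neg, sin_acos by auto. rewrite Hsq, Rabs_right; lra.
Qed.

Lemma circle_K : forall p q, p * p + q * q = 1 -> K (vadd (vscal p a3) (vscal q u3)).
Proof.
  intros p q Hpq.
  pose proof a3_unit as Ha. pose proof u3_unit as Hu. pose proof u3_a3 as Hua.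
  split.
  - unfold sphere. rewrite dot_add_l, !dot_add_r, !dot_scal_l, !dot_scal_r, Ha, Hu, Hua, (dot_sym a3 u3), Hua. lra.
  - intros eps He. destruct (psi_exists p q Hpq) as [psi [Hc Hs]].
    destruct (kronecker (2 * theta) phi_irr psi (eps/2)) as [k [Kc Ks]]; [lra|].
    exists (iter (Rot a3 b3) k a3). split.
    + exists (fun x => iter (Rot a3 b3) k x), a3. repeat split.
      apply iter_Hinf, Rot3_Hinf. left; apply a3_Delta.
    + rewrite (Rot_iter a3 b3 (-1/4) sth (2 * theta)); auto.
      2: apply b3_unit. 2: apply a3b3. 2: apply sth_sq. 2: apply sth_nz.
      2: { rewrite cos_2a_cos, cos_theta. ring. }
      2: { rewrite sin_2a, cos_theta. unfold sth. ring. }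
      fold u3.
      replace (vsub (vsub (vscal (cos (INR k * (2 * theta))) a3) (vscal (sin (INR k * (2 * theta))) u3))
                 (vadd (vscal p a3) (vscal q u3)))
        with (vadd (vscal (cos (INR k * (2 * theta)) - cos psi) a3) (vscal (- (sin (INR k * (2 * theta)) - sin psi)) u3))
        by (rewrite Hc, Hs; vext; ring).
      eapply Rle_lt_trans. apply vnorm_add. rewrite !vnorm_scal, (vnorm_unit _ Ha), (vnorm_unit _ Hu), Rabs_Ropp. lra.
Qed.

Lemma P3_K : forall x, sphere x -> dot x (e 0) = 0 -> dot x gp = 0 -> K x.
Proof.
  intros x Hx H0 H1. rewrite (P3_decomp x H0 H1). apply circle_K.
  unfold sphere in Hx. rewrite (P3_decomp x H0 H1) in Hx at 1.
  rewrite dot_add_l, !dot_scal_l in Hx.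
  rewrite (dot_sym a3 x), (dot_sym u3 x) in Hx. lra.
Qed.

Lemma house : forall b1 b2 x, dot b1 b2 = 0 -> 0 < dot b1 b1 -> 0 < dot b2 b2 ->
  (forall al be, sphere (vadd (vscal al b1) (vscal be b2)) -> K (vadd (vscal al b1) (vscal be b2))) ->
  sphere x ->
  (forall x', sphere x' -> dot x' b1 = 0 ->
     (forall n, dot n b1 = 0 -> dot n b2 = 0 -> dot x' n = dot x n) -> K x') ->
  K x.
Proof.
  intros b1 b2 x H12 H1 H2 Hcirc Hx Hnext.
  set (p1 := dot x b1 / dot b1 b1). set (p2 := dot x b2 / dot b2 b2).
  set (y := vadd (vscal p1 b1) (vscal p2 b2)).
  set (z := vsub x y).
  assert (Hyy : dot y y = p1 * p1 * dot b1 b1 + p2 * p2 * dot b2 b2).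
  { unfold y. rewrite dot_add_l, !dot_add_r, !dot_scal_l, !dot_scal_r, (dot_sym b2 b1), H12. ring. }
  set (lam := sqrt (dot y y / dot b2 b2)).
  assert (Hyy0 : 0 <= dot y y) by apply dot_ge0.
  assert (Hlam : lam * lam = dot y y / dot b2 b2) by (apply sqrt_sqrt; apply Rmult_le_pos; [lra|left; apply Rinv_0_lt_compat; lra]).
  set (y' := vscal lam b2).
  assert (Hy'y' : dot y' y' = dot y y).
  { unfold y'. rewrite dot_scal_l, dot_scal_r. replace (lam * (lam * dot b2 b2)) with ((lam*lam) * dot b2 b2) by ring.
    rewrite Hlam. field. lra. }
  assert (Hzb1 : dot z b1 = 0).
  { unfold z, y. rewrite dot_sub_l, dot_add_l, !dot_scal_l, (dot_sym b2 b1), H12. unfold p1. field. lra. }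
  assert (Hzb2 : dot z b2 = 0).
  { unfold z, y. rewrite dot_sub_l, dot_add_l, !dot_scal_l, H12. unfold p2. field. lra. }
  assert (Hzy : dot z y = 0).
  { unfold y. rewrite dot_add_r, !dot_scal_r, Hzb1, Hzb2. ring. }
  assert (Hzy' : dot z y' = 0).
  { unfold y'. rewrite dot_scal_r, Hzb2. ring. }
  set (x' := vadd y' z).
  assert (Hx' : sphere x').
  { unfold sphere, x'. rewrite dot_add_l, !dot_add_r, (dot_sym y' z), Hzy', Hy'y'.
    unfold sphere in Hx. replace x with (vadd y z) in Hx by (unfold z; vext; ring).
    rewrite dot_add_l, !dot_add_r, (dot_sym y z), Hzy in Hx. lra. }
  assert (Kx' : K x').
  { apply Hnext; auto.
    - unfold x'. rewrite dot_add_l, Hzb1. unfold y'. rewrite dot_scal_l, (dot_sym b2 b1), H12. ring.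
    - intros n Hn1 Hn2. unfold x'. rewrite dot_add_l. unfold z. rewrite dot_sub_l.
      unfold y', y. rewrite dot_add_l, !dot_scal_l, (dot_sym b1 n), (dot_sym b2 n), Hn1, Hn2. ring. }
  destruct (classic (y = y')) as [Eyy|Nyy].
  - replace x with x'; auto. unfold x', z. rewrite <- Eyy. vext; ring.
  - set (d := vsub y y').
    assert (Hdd : 0 < dot d d).
    { destruct (dot_ge0 d) as [P|P]; auto. symmetry in P. apply dot_eq0 in P. exfalso; apply Nyy.
      unfold d in P. destruct y, y'. unfold vsub, vadd, vscal in P; simpl in P. injection P; intros.
      apply V4eq; simpl; lra. }
    set (r := sqrt (dot d d)).
    assert (Hr : r * r = dot d d) by (apply sqrt_sqrt; lra).
    assert (Hr0 : 0 < r) by (apply sqrt_lt_R0; auto).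
    set (dh := vscal (/ r) d).
    assert (Kdh : K dh).
    { replace dh with (vadd (vscal (p1 / r) b1) (vscal ((p2 - lam) / r) b2)).
      2: { unfold dh, d, y, y'. vext; field; lra. }
      apply Hcirc. replace (vadd (vscal (p1 / r) b1) (vscal ((p2 - lam) / r) b2)) with dh.
      2: { unfold dh, d, y, y'. vext; field; lra. }
      unfold sphere, dh. rewrite dot_scal_l, dot_scal_r. field_simplify; [|lra]. rewrite <- Hr. field. lra. }
    assert (E : refl dh x' = x).
    { assert (Hxd : dot x' d = dot y' y - dot y' y').
      { unfold x', d. rewrite dot_add_l, !dot_sub_r, Hzy, Hzy'. ring. }
      assert (Hdd2 : dot d d = 2 * dot y' y' - 2 * dot y' y).
      { unfold d. rewrite !dot_sub_l, !dot_sub_r, (dot_sym y y'), <- Hy'y'. ring. }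
      unfold refl. replace (2 * dot x' dh) with (- r).
      2: { unfold dh. rewrite dot_scal_r, Hxd. apply Rmult_eq_reg_r with (r := r); [|lra].
           replace (2 * (/ r * (dot y' y - dot y' y')) * r) with (2 * (dot y' y - dot y' y')) by (field; lra).
           replace (- r * r) with (- dot d d) by lra. rewrite Hdd2. ring. }
      unfold dh, x', z, d. vext; field; lra. }
    rewrite <- E. apply K_refl; auto.
Qed.

Definition w3 := vadd b3 (vscal (1/4) a3).
Lemma w3_u3 : w3 = vscal sth u3.
Proof. unfold w3, u3, uvec. pose proof sth_nz. vext; field; auto. Qed.
Lemma w3_a3 : dot w3 a3 = 0.
Proof. rewrite w3_u3, dot_scal_l, u3_a3. ring. Qed.
Lemma w3_w3 : dot w3 w3 = 15/16.
Proof. rewrite w3_u3, dot_scal_l, dot_scal_r, u3_unit. pose proof sth_sq. nra. Qed.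

Lemma circle_K' : forall al be, sphere (vadd (vscal al a3) (vscal be w3)) -> K (vadd (vscal al a3) (vscal be w3)).
Proof.
  intros al be Hs. rewrite w3_u3. replace (vscal be (vscal sth u3)) with (vscal (be * sth) u3) by (vext; ring).
  apply circle_K. unfold sphere in Hs. rewrite w3_u3 in Hs.
  rewrite dot_add_l, !dot_add_r, !dot_scal_l, !dot_scal_r, a3_unit, u3_unit, u3_a3, (dot_sym a3 u3), u3_a3 in Hs.
  lra.
Qed.

Definition h1 := mkV (1/2) (1/2) (1/2) (1/2).
Definition h2 := mkV (1/2) 0 (-tau/2) (-tau'/2).
Definition ka := mkV 0 (-tau'/2) (1/2) (tau/2).
Definition kb := mkV 0 (1/2) (tau'/2) (-tau/2).

Lemma h1_D : Delta h1.
Proof. unfold Delta, DeltaP. right; left. exists true, true, true, true. unfold h1, sgn. vext; field. Qed.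
Lemma h2_D : Delta h2.
Proof.
  unfold Delta, DeltaP. right; right. exists (1,0,3,2)%nat, true, false, false. split.
  - simpl; tauto.
  - unfold h2, permv, sgn. vext; field.
Qed.
Lemma ka_D : Delta' ka.
Proof.
  unfold Delta', DeltaP. right; right. exists (0,3,1,2)%nat, true, true, false. split.
  - simpl; tauto.
  - unfold ka, permv, sgn. vext; field.
Qed.
Lemma kb_D : Delta kb.
Proof.
  unfold Delta, DeltaP. right; right. exists (0,1,2,3)%nat, true, true, false. split.
  - simpl; tauto.
  - unfold kb, permv, sgn. vext; field.
Qed.

Lemma Ktau : tau * tau = tau + 1 /\ tau' = 1 - tau.
Proof. split; [apply tau_sq|apply tau'_eq]. Qed.

Lemma tp2 : tau^2 = tau + 1. Proof. pose proof tau_sq. simpl. nsatz. Qed.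
Lemma tp3 : tau^3 = 2*tau + 1. Proof. pose proof tau_sq. simpl. nsatz. Qed.
Lemma tp4 : tau^4 = 3*tau + 2. Proof. pose proof tau_sq. simpl. nsatz. Qed.
Lemma tp5 : tau^5 = 5*tau + 3. Proof. pose proof tau_sq. simpl. nsatz. Qed.
Lemma tp6 : tau^6 = 8*tau + 5. Proof. pose proof tau_sq. simpl. nsatz. Qed.
Ltac tsolve := field_simplify_eq; pose proof tau_sq; pose proof tp2; pose proof tp3; pose proof tp4; pose proof tp5; pose proof tp6; nsatz.

Lemma e0_img : refl h1 (refl h2 (vscal (-1) a3)) = e 0.
Proof.
  unfold h1, h2, a3. rewrite tau'_eq. vext; tsolve.
Qed.

Definition s1 := refl h1 (refl h2 w3).

Lemma h1_unit : dot h1 h1 = 1. Proof. apply Delta_unit; left; apply h1_D. Qed.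
Lemma h2_unit : dot h2 h2 = 1. Proof. apply Delta_unit; left; apply h2_D. Qed.
Lemma ka_unit : dot ka ka = 1. Proof. apply Delta_unit; right; apply ka_D. Qed.
Lemma kb_unit : dot kb kb = 1. Proof. apply Delta_unit; left; apply kb_D. Qed.

Lemma rr_dot : forall p q x y, dot p p = 1 -> dot q q = 1 -> dot (refl p (refl q x)) (refl p (refl q y)) = dot x y.
Proof. intros. rewrite !refl_dot; auto. Qed.

Lemma s1_e0 : dot (e 0) s1 = 0.
Proof. rewrite <- e0_img. unfold s1. rewrite rr_dot by (apply h1_unit || apply h2_unit). rewrite dot_scal_l, dot_sym, w3_a3. ring. Qed.
Lemma s1_s1 : dot s1 s1 = 15/16.
Proof. unfold s1. rewrite rr_dot by (apply h1_unit || apply h2_unit). apply w3_w3. Qed.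

Lemma K_rr : forall p q x, (Delta p \/ Delta' p) -> (Delta q \/ Delta' q) -> K x -> K (refl p (refl q x)).
Proof. intros. apply K_refl. apply K_Delta; auto. apply K_refl; auto. apply K_Delta; auto. Qed.

Lemma circ1 : forall al be, sphere (vadd (vscal al (e 0)) (vscal be s1)) -> K (vadd (vscal al (e 0)) (vscal be s1)).
Proof.
  intros al be Hs.
  assert (E : vadd (vscal al (e 0)) (vscal be s1) = refl h1 (refl h2 (vadd (vscal (-al) a3) (vscal be w3)))).
  { rewrite <- e0_img. unfold s1. rewrite !refl_add, !refl_scal. vext; ring. }
  rewrite E. apply K_rr; [left; apply h1_D|left; apply h2_D|]. apply circle_K'.
  unfold sphere in *. rewrite E in Hs. rewrite rr_dot in Hs by (apply h1_unit || apply h2_unit). auto.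
Qed.

Definition r5 := 2 * tau - 1.
Definition v2 := vadd (vscal (3/2) a3) (vscal (2/5 * r5) w3).
Definition v2p := vadd (vscal (3/8 * r5) a3) (vscal (-3/2) w3).

Lemma gp_img : refl ka (refl kb v2) = gp.
Proof.
  unfold ka, kb, v2, w3, a3, b3, r5, gp. rewrite tau'_eq. vext; tsolve.
Qed.

Definition s2 := refl ka (refl kb v2p).

Lemma r5_sq : r5 * r5 = 5.
Proof. unfold r5. pose proof tau_sq. nra. Qed.

Lemma s2_gp : dot gp s2 = 0.
Proof.
  rewrite <- gp_img. unfold s2. rewrite rr_dot by (apply ka_unit || apply kb_unit).
  unfold v2, v2p. rewrite dot_add_l, !dot_add_r, !dot_scal_l, !dot_scal_r, a3_unit, w3_w3, w3_a3, (dot_sym a3 w3), w3_a3.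
  lra.
Qed.
Lemma s2_s2 : dot s2 s2 = 180/64.
Proof.
  unfold s2. rewrite rr_dot by (apply ka_unit || apply kb_unit).
  unfold v2p. rewrite dot_add_l, !dot_add_r, !dot_scal_l, !dot_scal_r, a3_unit, w3_w3, w3_a3, (dot_sym a3 w3), w3_a3.
  pose proof r5_sq. nra.
Qed.
Lemma gp_gp : dot gp gp = 3.
Proof. unfold gp, dot; simpl; ring. Qed.

Lemma k_e0 : refl ka (refl kb (e 0)) = e 0.
Proof. unfold ka, kb. vext; ring. Qed.
Lemma s2_e0 : dot (e 0) s2 = 0.
Proof.
  rewrite <- k_e0. unfold s2. rewrite rr_dot by (apply ka_unit || apply kb_unit).
  unfold v2p, w3, a3, b3, e, dot; simpl; ring.
Qed.
Lemma gp_e0 : dot (e 0) gp = 0.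
Proof. unfold gp, e, dot; simpl; ring. Qed.

Lemma circ2 : forall al be, sphere (vadd (vscal al gp) (vscal be s2)) -> K (vadd (vscal al gp) (vscal be s2)).
Proof.
  intros al be Hs.
  assert (E : vadd (vscal al gp) (vscal be s2) =
     refl ka (refl kb (vadd (vscal (al * (3/2) + be * (3/8 * r5)) a3) (vscal (al * (2/5 * r5) + be * (-3/2)) w3)))).
  { rewrite <- gp_img. unfold s2, v2, v2p. rewrite !refl_add, !refl_scal. vext; ring. }
  rewrite E. apply K_rr; [right; apply ka_D|left; apply kb_D|]. apply circle_K'.
  unfold sphere in *. rewrite E in Hs. rewrite rr_dot in Hs by (apply ka_unit || apply kb_unit). auto.
Qed.

Lemma all_K : forall x, sphere x -> K x.
Proof.
  intros x Hx. apply (house (e 0) s1 x s1_e0).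
  - unfold e, dot; simpl; lra.
  - rewrite s1_s1; lra.
  - apply circ1.
  - auto.
  - intros x1 Hx1 H10 _. apply (house gp s2 x1 s2_gp).
    + rewrite gp_gp; lra.
    + rewrite s2_s2; lra.
    + apply circ2.
    + auto.
    + intros x2 Hx2 H2g H2n. apply P3_K; auto.
      rewrite H2n; [exact H10 | apply gp_e0 | apply s2_e0].
Qed.

Fixpoint prodrefl (L : list V4) (x : V4) : V4 :=
  match L with [] => x | v :: L' => refl v (prodrefl L' x) end.
Definition units (L : list V4) := Forall (fun v => dot v v = 1) L.

Lemma prodrefl_O4 : forall L, units L -> O4 (prodrefl L).
Proof.
  induction L as [|v L IH]; intros HL.
  - intros x y; reflexivity.
  - inversion HL; subst. change (O4 (fun x => refl v (prodrefl L x))).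
    apply (O4_comp (refl v) (prodrefl L)). apply O4_refl; auto. auto.
Qed.

Lemma prodrefl_app : forall A B x, prodrefl (A ++ B) x = prodrefl A (prodrefl B x).
Proof. induction A as [|v A IH]; intros; simpl; auto. rewrite IH; auto. Qed.

Lemma prodrefl_rev : forall L, units L -> forall x, prodrefl (rev L) (prodrefl L x) = x.
Proof.
  induction L as [|v L IH]; intros HL x; simpl; auto.
  inversion HL; subst. rewrite prodrefl_app. simpl. rewrite refl_invol by auto. apply IH; auto.
Qed.

Lemma det_refl : forall v, det4 (refl v) = 1 - 2 * dot v v.
Proof. intros [a b c d]. unfold det4, det3, coord. cbv beta iota delta [refl vsub vadd vscal dot e c0 c1 c2 c3]. ring. Qed.

Lemma det_prodrefl : forall L, units L -> det4 (prodrefl L) = (-1) ^ (length L).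
Proof.
  induction L as [|v L IH]; intros HL.
  - simpl. apply det4_id.
  - inversion HL; subst. change (det4 (fun x => refl v (prodrefl L x)) = (-1) ^ S (length L)).
    rewrite det4_comp. rewrite det_refl, IH, H1 by auto. simpl; ring.
    apply O4_refl; auto. apply prodrefl_O4; auto.
Qed.

Lemma e_unit : forall j, (j < 4)%nat -> dot (e j) (e j) = 1.
Proof. intros j Hj. destruct j as [|[|[|[|j]]]]; try lia; unfold e, dot; simpl; ring. Qed.

Lemma hh_vec : forall p q, dot p p = 1 -> dot q q = 1 -> p <> q ->
  exists v, dot v v = 1 /\ refl v p = q /\ forall w, dot w p = dot w q -> refl v w = w.
Proof.
  intros p q Hp Hq Npq. set (d := vsub p q).
  assert (Hdd : 0 < dot d d).
  { destruct (dot_ge0 d) as [P|P]; auto. symmetry in P. apply dot_eq0 in P. exfalso; apply Npq.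
    unfold d in P. destruct p, q. unfold vsub, vadd, vscal in P; simpl in P. injection P; intros.
    apply V4eq; simpl; lra. }
  set (r := sqrt (dot d d)).
  assert (Hr : r * r = dot d d) by (apply sqrt_sqrt; lra).
  assert (Hr0 : 0 < r) by (apply sqrt_lt_R0; auto).
  exists (vscal (/ r) d). split; [|split].
  - rewrite dot_scal_l, dot_scal_r. field_simplify; [|lra]. rewrite <- Hr. field. lra.
  - unfold refl. rewrite dot_scal_r.
    assert (Hpd : dot p d = 1 - dot p q) by (unfold d; rewrite dot_sub_r, Hp; ring).
    assert (Hdd2 : dot d d = 2 - 2 * dot p q) by (unfold d; rewrite dot_sub_l, !dot_sub_r, Hp, Hq, (dot_sym q p); ring).
    rewrite Hpd. replace (2 * (/ r * (1 - dot p q))) with r.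
    + unfold d. vext; field; lra.
    + apply Rmult_eq_reg_r with (r := r); [|lra]. rewrite Hr, Hdd2. field. lra.
  - intros w Hw. unfold refl. rewrite dot_scal_r. unfold d at 1. rewrite dot_sub_r, Hw.
    vext; ring.
Qed.

Lemma hh_main : forall k, (k <= 4)%nat -> forall f, O4 f ->
  exists L, units L /\ forall j, (j < k)%nat -> prodrefl L (f (e j)) = e j.
Proof.
  induction k as [|k IH]; intros Hk f Hf.
  - exists []. split. constructor. intros; lia.
  - destruct (IH ltac:(lia) f Hf) as [L [HL HLj]].
    set (g := fun x => prodrefl L (f x)).
    assert (Og : O4 g) by (apply (O4_comp (prodrefl L) f); auto; apply prodrefl_O4; auto).
    destruct (classic (g (e k) = e k)) as [Eq|Nq].
    + exists L. split; auto. intros j Hj. destruct (Nat.eq_dec j k) as [->|Nj]; auto. apply HLj; lia.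
    + destruct (hh_vec (g (e k)) (e k)) as [v [Hv [Hvk Hvw]]]; auto.
      * rewrite Og. apply e_unit; lia.
      * apply e_unit; lia.
      * exists (v :: L). split. constructor; auto. intros j Hj. simpl.
        destruct (Nat.eq_dec j k) as [->|Nj]; [exact Hvk|].
        assert (Gj : g (e j) = e j) by (apply HLj; lia).
        change (prodrefl L (f (e j))) with (g (e j)). rewrite Gj. apply Hvw.
        rewrite <- Gj at 1. rewrite Og. reflexivity.
Qed.

Lemma O4_decomp : forall f, O4 f -> exists M, units M /\ forall j, (j < 4)%nat -> f (e j) = prodrefl M (e j).
Proof.
  intros f Hf. destruct (hh_main 4 (le_n 4) f Hf) as [L [HL Hj]].
  exists (rev L). split.
  - apply Forall_rev; auto.
  - intros j Hj4. rewrite <- (Hj j Hj4) at 2. rewrite prodrefl_rev; auto.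
Qed.

Lemma det4_basis : forall f g, (forall j, (j < 4)%nat -> f (e j) = g (e j)) -> det4 f = det4 g.
Proof.
  intros f g H. unfold det4.
  rewrite (H 0%nat), (H 1%nat), (H 2%nat), (H 3%nat) by lia. reflexivity.
Qed.

Lemma Sigma_approx : forall v, sphere v -> forall d, 0 < d -> exists s, Sigma s /\ vnorm (vsub s v) < d.
Proof. intros v Hv d Hd. destruct (all_K v Hv) as [_ A]. apply A; auto. Qed.

Lemma Sigma_refl_Hinf : forall s, Sigma s -> Hinf (refl s).
Proof.
  intros s Hs. destruct (Hinf_refl_Sigma s Hs) as [w [Hw E]].
  replace (refl s) with w; auto. apply functional_extensionality; intros; auto.
Qed.

Lemma list_approx : forall M, units M -> forall eps, 0 < eps ->
  exists g, Hinf g /\ forall x, sphere x -> vnorm (vsub (g x) (prodrefl M x)) < eps.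
Proof.
  induction M as [|v M IH]; intros HM eps He.
  - exists (fun x => x). split. apply gg_id. intros; simpl. rewrite vnorm_zero; auto.
  - inversion HM; subst. destruct (IH H2 (eps/2)) as [g [Hg Ag]]; [lra|].
    destruct (Sigma_approx v H1 (eps/8)) as [s [Hs Ds]]; [lra|].
    exists (fun x => refl s (g x)). split.
    + apply gg_comp; auto. apply Sigma_refl_Hinf; auto.
    + intros x Hx. simpl. pose proof (Ag x Hx).
      assert (sphere (prodrefl M x)) by (unfold sphere; rewrite prodrefl_O4; auto).
      pose proof (refl_approx s v (g x) (prodrefl M x) (Sigma_sphere s Hs) H1 H0). lra.
Qed.

Lemma dense_O4 : dense_maps Hinf O4.
Proof.
  intros f Hf eps He. destruct (O4_decomp f Hf) as [M [HM Hj]].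
  destruct (list_approx M HM eps He) as [g [Hg A]]. exists g. split; auto.
  intros j Hj4. rewrite Hj by auto. apply A. apply e_unit; auto.
Qed.

Lemma dense_sphere : dense_in_sphere Sigma.
Proof. split. apply Sigma_sphere. intros x Hx eps He. apply Sigma_approx; auto. Qed.

Definition zz (x y : V4) : V4 :=
  if Req_EM_T (dot (vadd x y) (vadd x y)) 0 then x
  else vscal (/ sqrt (dot (vadd x y) (vadd x y))) (vadd x y).

Lemma refl_neg : forall a v, refl (vscal (-1) a) v = refl a v.
Proof. intros; vext; ring. Qed.

Lemma zz_prop : forall x y, dot x x = 1 -> dot y y = 1 ->
  dot (zz x y) (zz x y) = 1 /\ forall v, refl x (refl (zz x y) (refl x (refl (zz x y) v))) = refl x (refl y v).
Proof.
  intros x y Hx Hy. unfold zz. destruct (Req_EM_T (dot (vadd x y) (vadd x y)) 0) as [E|N].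
  - split; auto. intros v. apply dot_eq0 in E.
    assert (Ey : y = vscal (-1) x).
    { destruct x, y. unfold vadd in E; simpl in E. injection E; intros. vext; lra. }
    rewrite Ey, refl_neg, !refl_invol by auto. reflexivity.
  - set (d := vadd x y) in *. set (n := dot d d) in *.
    assert (Hn : 0 < n) by (pose proof (dot_ge0 d); fold n in H; lra).
    set (r := sqrt n). assert (Hr : r * r = n) by (apply sqrt_sqrt; lra).
    assert (Hr0 : 0 < r) by (apply sqrt_lt_R0; auto).
    set (z := vscal (/ r) d).
    assert (Hz : dot z z = 1).
    { unfold z. rewrite dot_scal_l, dot_scal_r. fold n. field_simplify; [|lra]. rewrite <- Hr. field. lra. }
    split; auto.
    assert (Hzx : refl z x = vscal (-1) y).
    { unfold refl, z. rewrite dot_scal_r.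
      assert (Hxd : dot x d = 1 + dot x y) by (unfold d; rewrite dot_add_r, Hx; ring).
      assert (Hn2 : n = 2 + 2 * dot x y) by (unfold n, d; rewrite dot_add_l, !dot_add_r, Hx, Hy, (dot_sym y x); ring).
      rewrite Hxd. replace (2 * (/ r * (1 + dot x y))) with r.
      - unfold d. vext; field; lra.
      - apply Rmult_eq_reg_r with (r := r); [|lra]. rewrite Hr, Hn2. field. lra. }
    intros v. f_equal.
    rewrite <- (refl_conj (refl z) (refl z) x v).
    + rewrite Hzx, refl_neg. reflexivity.
    + apply O4_refl; auto.
    + intros; apply refl_invol; auto.
Qed.

Lemma comm_Hinf_plus : forall s t, Sigma s -> Sigma t ->
  Hinf_plus (fun v => refl s (refl t (refl s (refl t v)))).
Proof.
  intros s t Hs Ht. apply gg_base.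
  exists (refl s), (refl t), (refl s), (refl t).
  pose proof (Sigma_sphere s Hs) as Us. pose proof (Sigma_sphere t Ht) as Ut. unfold sphere in *.
  repeat split; try (apply Sigma_refl_Hinf; auto); intros; apply refl_invol; auto.
Qed.

Lemma pair_approx : forall n M, length M = (2 * n)%nat -> units M -> forall eps, 0 < eps ->
  exists g, Hinf_plus g /\ forall x, sphere x -> vnorm (vsub (g x) (prodrefl M x)) < eps.
Proof.
  induction n as [|n IH]; intros M HlM HM eps He.
  - destruct M; [|simpl in HlM; lia].
    exists (fun x => x). split. apply gg_id. intros; simpl. rewrite vnorm_zero; auto.
  - destruct M as [|x [|y M']]; simpl in HlM; try lia.
    inversion HM as [|? ? Hx HM1]; subst. inversion HM1 as [|? ? Hy HM']; subst.
    destruct (IH M' ltac:(lia) HM' (eps/2)) as [g [Hg Ag]]; [lra|].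
    destruct (zz_prop x y Hx Hy) as [Hz Ez].
    destruct (Sigma_approx x Hx (eps/32)) as [s [Hs Ds]]; [lra|].
    destruct (Sigma_approx (zz x y) Hz (eps/32)) as [t [Ht Dt]]; [lra|].
    exists (fun v => refl s (refl t (refl s (refl t (g v))))). split.
    + apply (gg_comp _ (fun v => refl s (refl t (refl s (refl t v)))) g); auto.
      apply comm_Hinf_plus; auto.
    + intros v Hv. simpl. rewrite <- Ez.
      set (z := zz x y) in *.
      pose proof (Sigma_sphere s Hs) as Us. pose proof (Sigma_sphere t Ht) as Ut.
      set (B0 := prodrefl M' v).
      assert (U0 : sphere B0) by (unfold sphere, B0; rewrite prodrefl_O4; auto).
      assert (U1 : sphere (refl z B0)) by (unfold sphere; rewrite refl_dot; auto).
      assert (U2 : sphere (refl x (refl z B0))) by (unfold sphere; rewrite refl_dot; auto).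
      assert (U3 : sphere (refl z (refl x (refl z B0)))) by (unfold sphere; rewrite refl_dot; auto).
      pose proof (Ag v Hv) as A0. fold B0 in A0.
      pose proof (refl_approx t z (g v) B0 Ut Hz U0) as A1.
      pose proof (refl_approx s x (refl t (g v)) (refl z B0) Us Hx U1) as A2.
      pose proof (refl_approx t z (refl s (refl t (g v))) (refl x (refl z B0)) Ut Hz U2) as A3.
      pose proof (refl_approx s x (refl t (refl s (refl t (g v)))) (refl z (refl x (refl z B0))) Us Hx U3) as A4.
      lra.
Qed.

Lemma pow_m1_odd : forall n, (-1) ^ (S (2 * n)) = -1.
Proof. induction n as [|n IH]; [simpl; ring|]. replace (S (2 * S n)) with (S (S (S (2 * n)))) by lia.
  change ((-1) ^ (S (S (S (2 * n))))) with (-1 * (-1 * (-1) ^ (S (2 * n)))). rewrite IH. ring. Qed.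

Lemma dense_SO4 : dense_maps Hinf_plus SO4.
Proof.
  intros f [Hf Df] eps He. destruct (O4_decomp f Hf) as [M [HM Hj]].
  assert (Dm : det4 f = (-1) ^ (length M)) by (rewrite (det4_basis f (prodrefl M) Hj); apply det_prodrefl; auto).
  destruct (Nat.Even_or_Odd (length M)) as [[n Hn]|[n Hn]].
  - destruct (pair_approx n M Hn HM eps He) as [g [Hg A]]. exists g. split; auto.
    intros j Hj4. rewrite Hj by auto. apply A. apply e_unit; auto.
  - exfalso. rewrite Hn, Nat.add_1_r, pow_m1_odd in Dm. lra.
Qed.

Theorem mainTheorem4 :
  (forall g, Hinf_plus g -> SO4 g) /\ dense_maps Hinf_plus SO4 /\
  (forall g, Hinf g -> O4 g) /\ dense_maps Hinf O4 /\
  dense_in_sphere Sigma.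
Proof.
  split; [exact Hinf_plus_SO4|]. split; [exact dense_SO4|]. split; [exact Hinf_O4|].
  split; [exact dense_O4|exact dense_sphere].
Qed.
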